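(* Let $\mathfrak h\in\mathrm{Mult}_\rho$, let $\Delta$ be a segment admissible to $\mathfrak h$, and let $\Delta'=[a',b']_\rho$ be linked to $\Delta$ with $\Delta'>\Delta$, such that $(\Delta,\Delta',\mathfrak h)$ satisfies the non-overlapping property. Then for every segment $\widetilde\Delta=[\widetilde a,b']_\rho$ with $\widetilde a\ge a'$ that is linked to $\Delta$, the triple $(\Delta,\widetilde\Delta,\mathfrak h)$ also satisfies the non-overlapping property.
   Context: Segments: for integers $a\le b$, $[a,b]_\rho$ (think of the integer interval $\{a,\dots,b\}$), with $a(\Delta)=a$, $b(\Delta)=b$, and inclusion of segments as intervals. Two segments are linked if their union is a segment (an interval) and neither contains the other; for linked $\Delta,\Delta'$ write $\Delta<\Delta'$ (or $\Delta'>\Delta$) if $b(\Delta)<b(\Delta')$. A multisegment is a finite multiset of nonempty segments; $\mathrm{Mult}_\rho$ is the set of multisegments. Write $[x,y]_\rho\prec^L[x',y']_\rho$ if $x<x'$, or $x=x'$ and $y<y'$. A segment $\Delta=[a,b]_\rho$ is admissible to $\mathfrak h$ if $\mathfrak h$ contains a segment $[a,c]_\rho$ with $c\ge b$. Removal sequence: for $\Delta=[a,b]_\rho$ admissible to $\mathfrak h$, let $\Delta_1=[a_1,b_1]_\rho$ be a shortest segment of $\mathfrak h$ with $a_1=a$ and $b_1\ge b$; recursively, let $\Delta_i=[a_i,b_i]_\rho$ be the $\prec^L$-minimal segment of $\mathfrak h$ with $a_{i-1}<a_i$ and $b\le b_i<b_{i-1}$, stopping when none exists; $\Delta_1,\dots,\Delta_r$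 is the removal sequence for $(\Delta,\mathfrak h)$. Non-overlapping property: for $\Delta$ admissible to $\mathfrak h$ and $\Delta'$ linked to $\Delta$ with $\Delta'>\Delta$, the triple $(\Delta,\Delta',\mathfrak h)$ satisfies it if, for the shortest segment $\overline\Delta$ in the removal sequence for $(\Delta,\mathfrak h)$ that contains the point $a(\Delta')-1$, one has $\Delta'\not\subset\overline\Delta$. *)

(* Defs.v *)
(* segments [a,b]_rho are modelled by pairs of integers (a,b). *)
From Stdlib Require Import ZArith List.
Import ListNotations.
Open Scope Z_scope.

Definition seg : Type := (Z * Z)%type.
Definition sa (s : seg) : Z := fst s.
Definition sb (s : seg) : Z := snd s.

Definition seg_valid (s : seg) : Prop := sa s <= sb s.

(* a multisegment: finite multiset (list up to order) of nonempty segments *)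
Definition mult := list seg.
Definition mult_valid (h : mult) : Prop := forall s, In s h -> seg_valid s.

Definition seg_mem (s : seg) (x : Z) : Prop := sa s <= x <= sb s.

Definition seg_sub (s t : seg) : Prop := forall x, seg_mem s x -> seg_mem t x.

Definition linked (s t : seg) : Prop :=
  (exists c d : Z, forall x, (seg_mem s x \/ seg_mem t x) <-> c <= x <= d)
  /\ ~ seg_sub s t /\ ~ seg_sub t s.

Definition seg_lt (s t : seg) : Prop := linked s t /\ sb s < sb t.

Definition precL (s t : seg) : Prop := sa s < sa t \/ (sa s = sa t /\ sb s < sb t).
Definition precL_le (s t : seg) : Prop := s = t \/ precL s t.

Definition admissible (D : seg) (h : mult) : Prop :=
  exists c, In (sa D, c) h /\ sb D <= c.

Definition first_ok (D : seg) (h : mult) (s : seg) : Prop :=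
  In s h /\ sa s = sa D /\ sb D <= sb s /\
  (forall t, In t h -> sa t = sa D -> sb D <= sb t -> sb s <= sb t).

Definition next_cand (D : seg) (h : mult) (prev t : seg) : Prop :=
  In t h /\ sa prev < sa t /\ sb D <= sb t /\ sb t < sb prev.

Definition next_ok (D : seg) (h : mult) (prev s : seg) : Prop :=
  next_cand D h prev s /\ (forall t, next_cand D h prev t -> precL_le s t).

Inductive rem_chain (D : seg) (h : mult) : seg -> list seg -> Prop :=
| rem_chain_end (prev : seg) :
    (forall t, ~ next_cand D h prev t) -> rem_chain D h prev [prev]
| rem_chain_step (prev s : seg) (l : list seg) :
    next_ok D h prev s -> rem_chain D h s l -> rem_chain D h prev (prev :: l).

Definition removal_seq (D : seg) (h : mult) (l : list seg) : Prop :=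
  exists s1, first_ok D h s1 /\ rem_chain D h s1 l.

Definition seg_len (s : seg) : Z := sb s - sa s.

Definition non_overlapping (D D' : seg) (h : mult) : Prop :=
  forall l, removal_seq D h l ->
  forall Dbar, In Dbar l -> seg_mem Dbar (sa D' - 1) ->
    (forall E, In E l -> seg_mem E (sa D' - 1) -> seg_len Dbar <= seg_len E) ->
    ~ seg_sub D' Dbar.

(* Main.v *)
Require Import Defs.
From Stdlib Require Import ZArith List Lia Classical.
Open Scope Z_scope.

Lemma chain_inside D h s l : rem_chain D h s l ->
  In s l /\ forall E, In E l -> sa s <= sa E /\ sb E <= sb s.
Proof.
  induction 1 as [prev _ | prev s l Hok Hc IH].
  - split; [left; auto|]. intros E [<-|[]]; lia.
  - destruct Hok as [[_ [H1 [_ H2]]] _]. split; [left; auto|].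
    intros E [<-|HE]; [lia|]. destruct IH as [_ IH]. apply IH in HE. lia.
Qed.

Lemma chain_cmp D h s l : rem_chain D h s l ->
  forall E F, In E l -> In F l ->
  (sa E <= sa F /\ sb F <= sb E) \/ (sa F <= sa E /\ sb E <= sb F).
Proof.
  induction 1 as [prev _ | prev s l Hok Hc IH].
  - intros E F [<-|[]] [<-|[]]; lia.
  - pose proof (chain_inside _ _ _ _ Hc) as [_ Hin].
    destruct Hok as [[_ [H1 [_ H2]]] _].
    intros E F [<-|HE] [<-|HF].
    + lia.
    + apply Hin in HF. lia.
    + apply Hin in HE. lia.
    + apply IH; auto.
Qed.

Lemma exists_min (P : seg -> Prop) (l : list seg) :
  (exists x, In x l /\ P x) ->
  exists m, In m l /\ P m /\ forall E, In E l -> P E -> seg_len m <= seg_len E.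
Proof.
  induction l as [|x l IH]; intros [y [Hy Py]]; [destruct Hy|].
  destruct (classic (exists z, In z l /\ P z)) as [Hz|Hz].
  - destruct (IH Hz) as [m [Hm [Pm Hmin]]].
    destruct (classic (P x /\ seg_len x < seg_len m)) as [[Px Hlt]|Hn].
    + exists x. split; [left; auto|]. split; auto.
      intros E [<-|HE] PE; [lia|]. specialize (Hmin E HE PE). lia.
    + exists m. split; [right; auto|]. split; auto.
      intros E [HE|HE] PE; [subst E|auto].
      destruct (Z_le_gt_dec (seg_len m) (seg_len x)); auto.
      exfalso; apply Hn; split; auto; lia.
  - exists x. destruct Hy as [<-|Hy]; [|exfalso; apply Hz; eauto].
    split; [left; auto|]. split; auto.
    intros E [<-|HE] PE; [lia|]. exfalso; apply Hz; eauto.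
Qed.

Lemma chain_geb D h s l : rem_chain D h s l -> sb D <= sb s ->
  forall E, In E l -> sb D <= sb E.
Proof.
  induction 1 as [prev _ | prev s l Hok Hc IH]; intros Hb.
  - intros E [<-|[]]; lia.
  - destruct Hok as [[_ [_ [H1 _]]] _].
    intros E [<-|HE]; [lia|]. apply IH; auto.
Qed.

Theorem mainTheorem18 (h : mult) (D D' : seg) :
  mult_valid h -> seg_valid D -> seg_valid D' ->
  admissible D h ->
  seg_lt D D' ->
  non_overlapping D D' h ->
  forall Dt : seg, seg_valid Dt -> sb Dt = sb D' -> sa D' <= sa Dt ->
    linked D Dt ->
    non_overlapping D Dt h.
Proof.
  intros _ HD HD' _ [[[c [d Hcd]] [Hns1 Hns2]] Hbb] Hno Dt HDt Hbt Hat [[c2 [d2 Hcd2]] _].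
  unfold seg_valid, seg_mem, seg_sub in *.
  assert (Ha : sa D < sa D').
  { destruct (Z_lt_ge_dec (sa D) (sa D')) as [|Hge]; auto.
    exfalso; apply Hns1. intros x Hx. unfold seg_mem in *. split; lia. }
  assert (Ha2 : sa D' <= sb D + 1).
  { destruct (Z_le_gt_dec (sa D') (sb D + 1)) as [|Hgt]; auto.
    exfalso.
    assert (c <= sa D <= d) by (apply Hcd; left; lia).
    assert (c <= sa D' <= d) by (apply Hcd; right; lia).
    assert (Hm : c <= sb D + 1 <= d) by lia.
    apply Hcd in Hm. lia. }
  assert (Ha3 : sa Dt <= sb D + 1).
  { destruct (Z_le_gt_dec (sa Dt) (sb D + 1)) as [|Hgt]; auto.
    exfalso.
    assert (c2 <= sa D <= d2) by (apply Hcd2; left; lia).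
    assert (c2 <= sa Dt <= d2) by (apply Hcd2; right; lia).
    assert (Hm : c2 <= sb D + 1 <= d2) by lia.
    apply Hcd2 in Hm. lia. }
  intros l [s1 [Hf Hc]] Dbar HDbar Hmem Hmin Hsub.
  pose proof (Hsub (sb Dt)) as Hs. unfold seg_mem in Hs.
  assert (Hsb : sb Dt <= sb Dbar) by (apply Hs; lia).
  destruct (chain_inside _ _ _ _ Hc) as [Hs1 _].
  pose proof Hf as [_ [Hs1a [Hs1b _]]].
  destruct (exists_min (fun E => seg_mem E (sa D' - 1)) l) as [m [Hm [Pm Hmm]]].
  { exists s1. split; auto. unfold seg_mem. lia. }
  apply (Hno l (ex_intro _ s1 (conj Hf Hc)) m Hm Pm Hmm).
  unfold seg_sub, seg_mem in *.
  destruct (chain_cmp _ _ _ _ Hc m Dbar Hm HDbar) as [[H1 H2]|[H1 H2]].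
  - intros x Hx. split; lia.
  - pose proof (chain_geb _ _ _ _ Hc Hs1b m Hm).
    assert (Hl : seg_len Dbar <= seg_len m) by (apply Hmin; auto; unfold seg_mem; lia).
    unfold seg_len in Hl. intros x Hx. split; lia.
Qed.
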